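(* With notation as in the context, the subgroup $R[\{1,2,\dots,n+1\}]$ of $\mathcal{G}^{*J}_n$ equals the product of the iterated commutator subgroups $[[\dots[R_{i_1,j_1},R_{i_2,j_2}],\dots],R_{i_t,j_t}]$ over those sequences of pairs $1\leq i_s<j_s\leq n+1$ such that (1) $\{i_1,j_1,\dots,i_t,j_t\}=\{1,2,\dots,n+1\}$ and (2) $\{i_1,j_1,\dots,i_t,j_t\}\setminus\{i_p,j_p\}\neq\{1,2,\dots,n+1\}$ for every $1\leq p\leq t$.
   Context: $J$ is a set; $\mathcal{G}^{*J}_n$ is the free group on letters $x_{i,j}(\alpha)$, $1\leq i<j\leq n+1$, $\alpha\in J$ (the $n$-th group of a free product of copies of a simplicial free group $\mathcal{G}$ with $\mathcal{G}_n$ free on $x_{i,j}$). $R_{i,j}$ is the normal closure of $\{x_{i,j}(\alpha)\mid\alpha\in J\}$ in $\mathcal{G}^{*J}_n$. $R[\{1,\dots,n+1\}]$ is the product of all iterated commutator subgroups $[[\dots[R_{i_1,j_1},R_{i_2,j_2}],\dots],R_{i_t,j_t}]$, $t\geq1$, over all sequences of pairs with $\{1,\dots,n+1\}\subseteq\{i_1,j_1,\dots,i_t,j_t\}$ (for $t=1$ the subgroup is $R_{i_1,j_1}$). *)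

(* Defs.v *)
From mathcomp Require Import all_boot.
Set Implicit Arguments. Unset Strict Implicit. Unset Printing Implicit Defensive.

Record grp := Grp {
  carrier :> Type;
  gmul : carrier -> carrier -> carrier;
  gone : carrier;
  ginv : carrier -> carrier;
  gmulA : forall a b c, gmul a (gmul b c) = gmul (gmul a b) c;
  gmul1 : forall a, gmul gone a = a;
  gmulV : forall a, gmul (ginv a) a = gone }.

Definition ghom (G H : grp) (f : G -> H) : Prop :=
  forall a b, f (gmul a b) = gmul (f a) (f b).

Definition IsFree (L : Type) (G : grp) (x : L -> G) : Prop :=
  forall (H : grp) (f : L -> H),
    exists phi : G -> H, ghom phi /\ (forall l, phi (x l) = f l) /\
      (forall psi : G -> H, ghom psi -> (forall l, psi (x l) = f l) ->
         forall g, psi g = phi g).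

Definition is_subgroup (G : grp) (H : G -> Prop) : Prop :=
  H (gone G) /\ (forall a b, H a -> H b -> H (gmul a b)) /\ (forall a, H a -> H (ginv a)).

Definition gen (G : grp) (S : G -> Prop) : G -> Prop :=
  fun g => forall H : G -> Prop, is_subgroup H -> (forall s, S s -> H s) -> H g.

Definition conjg (G : grp) (s g : G) : G := gmul (ginv g) (gmul s g).
Definition commg (G : grp) (a b : G) : G :=
  gmul (gmul (ginv a) (ginv b)) (gmul a b).

Definition normal_closure (G : grp) (S : G -> Prop) : G -> Prop :=
  gen (fun h => exists s g, S s /\ h = conjg s g).

Definition comm_sub (G : grp) (A B : G -> Prop) : G -> Prop :=
  gen (fun h => exists a b, A a /\ B b /\ h = commg a b).

Definition pairs (n : nat) : Type :=
  {p : nat * nat | (0 < p.1) && (p.1 < p.2) && (p.2 <= n.+1)}.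

Definition letter (n : nat) (J : Type) : Type := (pairs n * J)%type.

Definition Rij (n : nat) (J : Type) (G : grp) (x : letter n J -> G)
  (p : pairs n) : G -> Prop :=
  normal_closure (fun g => exists a : J, g = x (p, a)).

(* [[...[R_{p0}, R_{p1}], ...], R_{pt}] for the sequence p0 :: s *)
Definition iter_comm (n : nat) (G : grp) (R : pairs n -> G -> Prop)
  (p0 : pairs n) (s : seq (pairs n)) : G -> Prop :=
  foldl (fun H p => comm_sub H (R p)) (R p0) s.

Definition in_support (n : nat) (s : seq (pairs n)) (k : nat) : bool :=
  has (fun p : pairs n => (k == (val p).1) || (k == (val p).2)) s.

Definition covers (n : nat) (s : seq (pairs n)) : Prop :=
  forall k, 1 <= k <= n.+1 -> in_support s k.

Definition minimal_cover (n : nat) (s : seq (pairs n)) : Prop :=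
  forall q, q < size s -> ~ covers (take q s ++ drop q.+1 s).

Definition Rfull (n : nat) (J : Type) (G : grp) (x : letter n J -> G) : G -> Prop :=
  gen (fun g => exists (p0 : pairs n) (s : seq (pairs n)),
         covers (p0 :: s) /\ iter_comm (Rij x) p0 s g).

Definition Rminimal (n : nat) (J : Type) (G : grp) (x : letter n J -> G) : G -> Prop :=
  gen (fun g => exists (p0 : pairs n) (s : seq (pairs n)),
         covers (p0 :: s) /\ minimal_cover (p0 :: s) /\
         iter_comm (Rij x) p0 s g).

(* Main.v *)
From Stdlib Require Import Classical.
From mathcomp Require Import all_boot.
From mathcomp Require Import zify.
Require Import Defs.
Set Implicit Arguments. Unset Strict Implicit.
From mathcomp Require Import all_boot.

Definition subs (G : grp) (A B : G -> Prop) := forall g, A g -> B g.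
Definition normal (G : grp) (A : G -> Prop) := forall h c, A h -> A (Defs.conjg h c).

Lemma gmulRV (G : grp) (a : G) : gmul a (ginv a) = gone G.
Proof.
transitivity (gmul (gmul (ginv (ginv a)) (ginv a)) (gmul a (ginv a))).
  by rewrite gmulV gmul1.
rewrite -gmulA (gmulA (ginv a) a) gmulV gmul1. exact: gmulV.
Qed.

Lemma gmulr1 (G : grp) (a : G) : gmul a (gone G) = a.
Proof. by rewrite -(gmulV a) gmulA gmulRV gmul1. Qed.

Lemma ginv_uniq (G : grp) (a b : G) : gmul b a = gone G -> b = ginv a.
Proof. move=> H. by rewrite -(gmulr1 b) -(gmulRV a) gmulA H gmul1. Qed.

Lemma ginvK (G : grp) (a : G) : ginv (ginv a) = a.
Proof. symmetry; apply: ginv_uniq; exact: gmulRV. Qed.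

Lemma ginvM (G : grp) (a b : G) : ginv (gmul a b) = gmul (ginv b) (ginv a).
Proof.
symmetry; apply: ginv_uniq.
by rewrite -gmulA (gmulA (ginv a) a) gmulV gmul1 gmulV.
Qed.

Lemma conjgM (G : grp) (a b c : G) :
  Defs.conjg (gmul a b) c = gmul (Defs.conjg a c) (Defs.conjg b c).
Proof.
rewrite /Defs.conjg !gmulA -(gmulA _ c (ginv c)) gmulRV gmulr1. done.
Qed.

Lemma conjg1 (G : grp) (c : G) : Defs.conjg (gone G) c = gone G.
Proof. by rewrite /Defs.conjg gmul1 gmulV. Qed.

Lemma conjgV (G : grp) (a c : G) : Defs.conjg (ginv a) c = ginv (Defs.conjg a c).
Proof. by rewrite /Defs.conjg !ginvM ginvK !gmulA. Qed.

Lemma conjgJ (G : grp) (s g c : G) : Defs.conjg (Defs.conjg s g) c = Defs.conjg s (gmul g c).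
Proof. by rewrite /Defs.conjg ginvM !gmulA. Qed.

Lemma conjg_comm (G : grp) (a b c : G) :
  Defs.conjg (Defs.commg a b) c = Defs.commg (Defs.conjg a c) (Defs.conjg b c).
Proof. by rewrite /Defs.commg !conjgM !conjgV. Qed.

Lemma gen_sub (G : grp) (S : G -> Prop) : is_subgroup (gen S).
Proof.
split; [|split].
- by move=> H [H1 _] _.
- move=> a b Ha Hb H HH HS. case: (HH) => _ [Hm _]. exact: Hm (Ha H HH HS) (Hb H HH HS).
- move=> a Ha H HH HS. case: (HH) => _ [_ Hi]. exact: Hi (Ha H HH HS).
Qed.

Lemma gen_incl (G : grp) (S : G -> Prop) s : S s -> gen S s.
Proof. by move=> Hs H _ HS; apply: HS. Qed.

Lemma gen_min (G : grp) (S H : G -> Prop) :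
  is_subgroup H -> (forall s, S s -> H s) -> subs (gen S) H.
Proof. by move=> HH HS g Hg; apply: Hg. Qed.

Lemma gen_normal (G : grp) (S : G -> Prop) :
  (forall s c, S s -> S (Defs.conjg s c)) -> normal (gen S).
Proof.
move=> HS h c Hh.
pose K := fun g : G => forall c, gen S (Defs.conjg g c).
have [G1 [GM GI]] := gen_sub S.
suff: K h by apply.
apply: (gen_min (H := K)) Hh.
- split; [|split].
  + by move=> d; rewrite conjg1.
  + by move=> a b Ha Hb d; rewrite conjgM; apply: GM.
  + by move=> a Ha d; rewrite conjgV; apply: GI.
- by move=> s Hs d; apply: gen_incl; apply: HS.
Qed.

Lemma nc_normal (G : grp) (S : G -> Prop) : normal (normal_closure S).
Proof.
apply: gen_normal => h c [s [g [Hs ->]]].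
exists s, (gmul g c); split => //; exact: conjgJ.
Qed.

Lemma comm_normal (G : grp) (A B : G -> Prop) :
  normal A -> normal B -> normal (comm_sub A B).
Proof.
move=> NA NB; apply: gen_normal => h c [a [b [Ha [Hb ->]]]].
exists (Defs.conjg a c), (Defs.conjg b c); split; first exact: NA.
split; first exact: NB. exact: conjg_comm.
Qed.

Lemma comm_subr (G : grp) (A B : G -> Prop) :
  is_subgroup B -> normal B -> subs (comm_sub A B) B.
Proof.
move=> SB NB; apply: gen_min => // h [a [b [Ha [Hb ->]]]].
have ->: Defs.commg a b = gmul (Defs.conjg (ginv b) a) b by rewrite /Defs.commg /Defs.conjg !gmulA.
case: SB => _ [Hm Hi]. apply: Hm => //. apply: NB. exact: Hi.
Qed.

Lemma comm_subl (G : grp) (A B : G -> Prop) :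
  is_subgroup A -> normal A -> subs (comm_sub A B) A.
Proof.
move=> SA NA; apply: gen_min => // h [a [b [Ha [Hb ->]]]].
have ->: Defs.commg a b = gmul (ginv a) (Defs.conjg a b) by rewrite /Defs.commg /Defs.conjg !gmulA.
case: SA => _ [Hm Hi]. apply: Hm; first exact: Hi. exact: NA.
Qed.

Lemma comm_mono (G : grp) (A A' B B' : G -> Prop) :
  subs A A' -> subs B B' -> subs (comm_sub A B) (comm_sub A' B').
Proof.
move=> HA HB; apply: gen_min; first exact: gen_sub.
move=> h [a [b [Ha [Hb ->]]]]; apply: gen_incl.
exists a, b; split; first exact: HA. split; first exact: HB. done.
Qed.

Section Fold.
Lemma foldl_mono (n : nat) (G : grp) (R : pairs n -> G -> Prop) (s : seq (pairs n)) :
  forall X Y, subs X Y ->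
  subs (foldl (fun H p => comm_sub H (R p)) X s) (foldl (fun H p => comm_sub H (R p)) Y s).
Proof.
elim: s => [|p s IH] X Y HXY //=.
apply: IH; apply: comm_mono => //.
Qed.

Lemma foldl_drop (n : nat) (G : grp) (R : pairs n -> G -> Prop)
  (HR : forall p, normal (R p)) (s : seq (pairs n)) :
  forall X q, is_subgroup X -> normal X -> q < size s ->
  subs (foldl (fun H p => comm_sub H (R p)) X s)
       (foldl (fun H p => comm_sub H (R p)) X (take q s ++ drop q.+1 s)).
Proof.
elim: s => [|p s IH] X q SX NX //= Hq.
case: q Hq => [|q] Hq /=.
- rewrite drop0; apply: foldl_mono; exact: comm_subl.
- apply: IH => //; first exact: gen_sub.
  apply: comm_normal => //.
Qed.
End Fold.

Lemma Rij_sub (J : Type) (n : nat) (G : grp) (x : letter n J -> G) p :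
  is_subgroup (Rij x p).
Proof. exact: gen_sub. Qed.

Lemma Rij_normal (J : Type) (n : nat) (G : grp) (x : letter n J -> G) p :
  normal (Rij x p).
Proof. exact: nc_normal. Qed.

Lemma covers_nil (n : nat) : ~ covers (n := n) [::].
Proof. move=> H. by have := H 1 is_true_true. Qed.

Lemma reduce (J : Type) (n : nat) (G : grp) (x : letter n J -> G) p1 s1 :
  covers (p1 :: s1) -> ~ minimal_cover (p1 :: s1) ->
  exists p2 s2, covers (p2 :: s2) /\ size s2 < size s1 /\
    subs (iter_comm (Rij x) p1 s1) (iter_comm (Rij x) p2 s2).
Proof.
move=> Hc Hm.
have [q Hq] := not_all_ex_not _ _ Hm.
have Hqs := not_imply_elim _ _ Hq.
have Hcov := NNPP _ (not_imply_elim2 _ _ Hq).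
have Hsz : size (take q (p1 :: s1) ++ drop q.+1 (p1 :: s1)) = size s1.
  rewrite size_cat size_take size_drop Hqs /=. move: Hqs => /= Hqs. lia.
move: Hcov Hsz.
case E: (take q (p1 :: s1) ++ drop q.+1 (p1 :: s1)) => [|p2 s2] Hcov Hsz.
  by case: (covers_nil Hcov).
exists p2, s2; split => //; split; first by move: Hsz => /= ->.
case: q Hqs Hq E => [|q] Hqs Hq /=.
- rewrite drop0 => ->. rewrite /iter_comm /=.
  apply: foldl_mono. apply: comm_subr; [exact: Rij_sub | exact: Rij_normal].
- case=> <- <-. rewrite /iter_comm. apply: foldl_drop => //.
  + exact: Rij_normal.
  + exact: Rij_sub.
  + exact: Rij_normal.
Qed.

Lemma minimize (J : Type) (n : nat) (G : grp) (x : letter n J -> G) N :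
  forall p1 s1, size s1 <= N -> covers (p1 :: s1) ->
  exists p0 s, covers (p0 :: s) /\ minimal_cover (p0 :: s) /\
    subs (iter_comm (Rij x) p1 s1) (iter_comm (Rij x) p0 s).
Proof.
elim: N => [|N IH] p1 s1 Hs Hc.
- case: (classic (minimal_cover (p1 :: s1))) => Hm.
    by exists p1, s1; split => //; split => // g.
  have [p2 [s2 [_ [Hlt _]]]] := reduce x Hc Hm. lia.
- case: (classic (minimal_cover (p1 :: s1))) => Hm.
    by exists p1, s1; split => //; split => // g.
  have [p2 [s2 [Hc2 [Hlt Hsub]]]] := reduce x Hc Hm.
  have [p0 [s [H1 [H2 H3]]]] := IH p2 s2 ltac:(lia) Hc2.
  exists p0, s; split => //; split => // g Hg. apply: H3. exact: Hsub.
Qed.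

Theorem lemma3p6 (J : Type) (n : nat) (G : grp) (x : letter n J -> G)
  (Hfree : IsFree x) :
  forall g : G, Rfull x g <-> Rminimal x g.
Proof.
move=> g; split.
- apply: gen_min; first exact: gen_sub.
  move=> h [p1 [s1 [Hc Hh]]].
  have [p0 [s [H1 [H2 H3]]]] := minimize x (leqnn (size s1)) Hc.
  apply: gen_incl. exists p0, s; split => //; split => //. exact: H3.
- apply: gen_min; first exact: gen_sub.
  move=> h [p1 [s1 [Hc [_ Hh]]]]. apply: gen_incl. by exists p1, s1.
Qed.
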